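(* For any planar weighted graph $(G,x)$ and any set of dual edges $\varkappa\subset E(G^* )$, $$\sum_{P\in\mathcal E(G)}(-1)^{\varkappa\cdot P}x(P)=(-1)^{|\varkappa|}\sum_{D\in\mathcal D(G^K)}(-1)^{t(D)}(-1)^{\varkappa\cdot D}x^K(D).$$
   Context: Let $G$ be a finite connected graph embedded in the plane, with edge weights $x=(x_e)$. Let $\vec E(G)$ be the set of oriented edges, with origin $o(e)$ and reversal $\bar e$. $\mathcal E(G)$ is the set of even subgraphs and $x(P)=\prod_{e\in P}x_e$. $G^*$ is the planar dual and $e^*$ the dual of $e$. Terminal graph $G^K$. Its vertex set is $\vec E(G)$. It has long edges $\{e,\bar e\}$ of weight $1$, and short edges $\{e,e'\}$ of weight $(x_ex_{e'})^{1/2}$ for each pair $e\ne e'$ with $o(e)=o(e')$. $\mathcal D(G^K)$ is the set of its perfect matchings and $x^K(D)$ the product of the weights of the edges of $D$. $t(D)$ is the number of pairs of short edges of $D$ at the same vertex $v$ whose endpoints interlace in the cyclic order around $v$. Intersection counts. $|\varkappa|$ is the number of edges in $\varkappa$. $\varkappa\cdot P$ is the number of $e\in P$ with $e^*\in\varkappa$. $\varkappa\cdot D$ is the number of long edges $\{e,\bar e\}\in D$ whose underlying edge of $G$ has its dual in $\varkappa$. *)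

(* Defs.v *)
(* Planar graphs are represented by combinatorial maps
   (rotation systems): edges form a finType E, oriented edges (darts) are
   E * bool, reversal flips the boolean, and a permutation sigma of the darts
   gives the counter-clockwise cyclic order of darts around each vertex;
   vertices = sigma-orbits, faces = (sigma \o rev)-orbits. *)
From HB Require Import structures.
From mathcomp Require Import all_boot all_order all_algebra all_fingroup.
Set Implicit Arguments.
Unset Strict Implicit.
Unset Printing Implicit Defensive.
Import Order.TTheory GRing.Theory Num.Theory.

Section Map.
Variable E : finType.

Definition dart := (E * bool)%type.
Definition edge_of (d : dart) : E := d.1.
Definition rev_dart (d : dart) : dart := (d.1, ~~ d.2).

Variable sigma : {perm dart}.

Definition same_origin (a b : dart) : bool := fconnect sigma a b.

Definition face_perm (d : dart) : dart := sigma (rev_dart d).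

Definition n_vertices : nat := fcard sigma (@predT dart).
Definition n_faces : nat := fcard face_perm (@predT dart).

Definition map_connected : Prop :=
  forall a b : dart,
    connect (fun u v => (v == sigma u) || (v == rev_dart u)) a b.

(* the rotation system is a plane embedding: Euler's formula V - E + F = 2 *)
Definition map_planar : Prop := (n_vertices + n_faces = #|E| + 2)%N.

(* even subgraphs: every vertex has even degree (loops counted twice) *)
Definition even_subgraph (P : {set E}) : bool :=
  [forall d : dart, ~~ odd #|[set d' : dart | same_origin d d' & edge_of d' \in P]|].

(* Terminal graph G^K.  Edges: inl e = long edge {e, rev e};
   inr (a, b) = short edge {a, b} (valid when a != b, o(a) = o(b), and
   enum_rank a < enum_rank b so that each unordered pair occurs once). *)
Definition kedge := (E + (dart * dart))%type.

Definition kedge_valid (k : kedge) : bool :=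
  match k with
  | inl _ => true
  | inr (a, b) => same_origin a b && (enum_rank a < enum_rank b)%N
  end.

Definition kends (k : kedge) : {set dart} :=
  match k with
  | inl e => [set (e, true); (e, false)]
  | inr (a, b) => [set a; b]
  end.

Definition perfect_matching (M : {set kedge}) : bool :=
  [forall k in M, kedge_valid k] &&
  [forall d : dart, #|[set k in M | d \in kends k]| == 1%N].

Definition strictly_between (a b c : dart) : bool :=
  (c != a) && (findex sigma a c < findex sigma a b)%N.

Definition interlace (k1 k2 : kedge) : bool :=
  match k1, k2 with
  | inr (a, b), inr (c, d) =>
      same_origin a c &&
      (strictly_between a b c != strictly_between a b d)
  | _, _ => false
  end.

Definition tK (M : {set kedge}) : nat :=
  #|[set p : kedge * kedge | [&& p.1 \in M, p.2 \in M,
        (enum_rank p.1 < enum_rank p.2)%N & interlace p.1 p.2]]|.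

(* kappa . P  (kappa given as the set of edges e whose dual e^* is in kappa) *)
Definition kappa_dot_P (kappa P : {set E}) : nat := #|kappa :&: P|.

Definition kappa_dot_D (kappa : {set E}) (M : {set kedge}) : nat :=
  #|[set e in kappa | inl e \in M]|.

Local Open Scope ring_scope.

Definition weight_P (R : ringType) (x : E -> R) (P : {set E}) : R :=
  \prod_(e in P) x e.

Definition kweight (R : rcfType) (x : E -> R) (k : kedge) : R :=
  match k with
  | inl _ => 1
  | inr (a, b) => Num.sqrt (x (edge_of a) * x (edge_of b))
  end.

Definition weight_D (R : rcfType) (x : E -> R) (M : {set kedge}) : R :=
  \prod_(k in M) kweight x k.

End Map.

(* Main.v *)
Require Import Defs.
From HB Require Import structures.
From mathcomp Require Import all_boot all_order all_algebra all_fingroup.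
From mathcomp Require Import zify ring.
Import Order.TTheory GRing.Theory Num.Theory.
Set Implicit Arguments. Unset Strict Implicit. Unset Printing Implicit Defensive.

Lemma modD_case (n x z : nat) : x < n -> z < n ->
  (z + n - x) %% n = if x <= z then z - x else z + n - x.
Proof.
move=> hx hz; case: (leqP x z) => h.
  have ->: z + n - x = (z - x) + n by lia.
  rewrite modnDr modn_small //; lia.
rewrite modn_small //; lia.
Qed.

Lemma arith_sym (n pb pc pd : nat) :
  0 < pb < n -> 0 < pc < n -> 0 < pd < n ->
  pb != pc -> pb != pd -> pc != pd ->
  ((pc < pb) != (pd < pb)) =
  (((0 + n - pc) %% n < (pd + n - pc) %% n) != ((pb + n - pc) %% n < (pd + n - pc) %% n)).
Proof.
move=> hb hc hd *; rewrite !modD_case; try lia.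
case: (leqP pc 0); case: (leqP pc pd); case: (leqP pc pb); move=> *; lia.
Qed.

Lemma rank_sum (R : pzRingType) (T : finType) (A : {set T}) (p : T -> nat) :
  {in A &, injective p} ->
  (\sum_(c in A) (-1) ^+ #|[set u in A | (p u < p c)%N]| = (odd #|A|)%:R :> R)%R.
Proof.
move: {2}#|A| (erefl #|A|) => n; elim: n A => [|n IH] A hA inj.
  by rewrite (cards0_eq hA) big_set0 cards0.
have [m0 m0A] : exists m0, m0 \in A by apply/set0Pn; rewrite -card_gt0 hA.
case: (@arg_maxnP _ m0 (mem A) p m0A) => m mA mmax.
have {}mA : m \in A := mA.
have hA' : #|A :\ m| = n by move: hA; rewrite (cardsD1 m) mA => -[].
have lt u : u \in A -> u != m -> (p u < p m)%N.
  move=> uA um; have hu : (p u <= p m)%N := mmax u uA.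
  rewrite ltn_neqAle hu andbT.
  by apply: contra um => /eqP e; apply/eqP; apply: inj.
rewrite (big_setD1 m mA) /=.
have -> : [set u in A | (p u < p m)%N] = A :\ m.
  apply/setP => u; rewrite !inE; case: (eqVneq u m) => [->|um] /=; first by rewrite ltnn andbF.
  by case: (boolP (u \in A)) => // uA; rewrite lt.
rewrite (eq_bigr (fun c => (-1) ^+ #|[set u in A :\ m | (p u < p c)%N]|))%R; last first.
  move=> c; rewrite !inE => /andP [cm cA]; congr (_ ^+ _)%R; apply: eq_card => u; rewrite !inE.
  case: (eqVneq u m) => [->|um] //=.
  by rewrite mA /= ltnNge ltnW // lt.
rewrite IH //; last by move=> x y /setD1P [_ xA] /setD1P [_ yA]; apply: inj.
rewrite hA' hA -signr_odd /=; case: (odd n) => /=.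
  by rewrite expr1 addNr.
by rewrite expr0 addr0.
Qed.


Section S.
Variable E : finType.
Variable sigma : {perm dart E}.
Local Notation so := (same_origin sigma).
Local Notation fx := (findex sigma).
Local Notation ordr := (@fingraph.order _ sigma).

Lemma so_refl a : so a a. Proof. exact: connect0. Qed.
Lemma so_sym a b : so a b = so b a.
Proof. exact: (fconnect_sym (@perm_inj _ sigma)). Qed.
Lemma so_trans a b c : so a b -> so b c -> so a c.
Proof. exact: connect_trans. Qed.

Lemma ord_iter k x : ordr (iter k sigma x) = ordr x.
Proof.
elim: k => //= k IH; rewrite order_id_cycle ?IH //.
exact: (cycle_orbit (@perm_inj _ sigma)).
Qed.

Lemma ord_so a c : so a c -> ordr c = ordr a.
Proof. by move=> h; rewrite -(iter_findex h) ord_iter. Qed.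

Lemma iter_mod x k : iter k sigma x = iter (k %% ordr x) sigma x.
Proof.
rewrite {1}(divn_eq k (ordr x)) addnC iterD.
suff ->: iter (k %/ ordr x * ordr x) sigma x = x by [].
elim: (k %/ ordr x) => //= m IH.
by rewrite mulSn iterD IH iter_order //; exact: perm_inj.
Qed.

Lemma findex_add r a c : so r a -> so a c ->
  fx r c = (fx r a + fx a c) %% ordr r.
Proof.
move=> hra hac.
have e : c = iter (fx r a + fx a c) sigma r by rewrite addnC iterD (iter_findex hra) (iter_findex hac).
rewrite {1}e iter_mod findex_iter // ltn_mod fingraph.order_gt0 //.
Qed.

Lemma findex_rel r a c : so r a -> so r c ->
  fx a c = (fx r c + ordr r - fx r a) %% ordr r.
Proof.
move=> hra hrc.
have hac : so a c by apply: so_trans hrc; rewrite so_sym.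
have := findex_add hra hac.
have : fx a c < ordr r by rewrite -(ord_so hra) findex_max.
have : fx r a < ordr r by rewrite findex_max.
have : 0 < ordr r by exact: fingraph.order_gt0.
move: (fx a c) (fx r a) (fx r c) (ordr r) => F pa pc n.
move=> n0 hpa hF epc.
have hpc : pc < n by rewrite epc ltn_mod.
rewrite modD_case //.
case: (ltnP (pa + F) n) => h.
  by move: epc; rewrite modn_small // => ->; case: leqP; lia.
move: epc; have ->: pa + F = (pa + F - n) + n by lia.
rewrite modnDr modn_small; last by lia.
by move=> ->; case: leqP; lia.
Qed.

Lemma fx_inj a b c : so a b -> so a c -> fx a b = fx a c -> b = c.
Proof. by move=> hb hc e; rewrite -(iter_findex hb) -(iter_findex hc) e. Qed.

Lemma interlace_sym a b c d : so a b -> so c d ->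
  a != b -> a != c -> a != d -> b != c -> b != d -> c != d ->
  interlace sigma (inr (a, b)) (inr (c, d)) = interlace sigma (inr (c, d)) (inr (a, b)).
Proof.
move=> hab hcd nab nac nad nbc nbd ncd; rewrite /interlace /strictly_between.
case: (boolP (so a c)) => hac; last by rewrite so_sym (negPf hac).
have hca : so c a by rewrite so_sym.
have had : so a d := so_trans hac hcd.
rewrite hca /= (eq_sym c) nac (eq_sym d) nad nbc /=.
rewrite (findex_rel hac (so_refl a)) (findex_rel hac hab) (findex_rel hac had) findex0.
have pos z : so a z -> a != z -> 0 < fx a z < ordr a.
  by move=> hz nz; rewrite findex_max // lt0n findex_eq0 nz.
have dst y z : so a y -> so a z -> y != z -> fx a y != fx a z.
  by move=> hy hz; apply: contra => /eqP e; apply/eqP; exact: fx_inj hy hz e.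
by apply: arith_sym; auto.
Qed.


Definition shortk (k : kedge E) := if k is inr _ then true else false.
Definition cov (M : {set kedge E}) (d : dart E) := #|[set k in M | d \in kends k]|.
Definition pmX (X : {set dart E}) (M : {set kedge E}) :=
  [forall k in M, shortk k && kedge_valid sigma k] &&
  [forall d, cov M d == (d \in X)].

Lemma pmX_valid X M k : pmX X M -> k \in M -> shortk k && kedge_valid sigma k.
Proof. by case/andP=> /forall_inP h _ /h. Qed.

Lemma pmX_cov X M d : pmX X M -> cov M d = (d \in X).
Proof. by case/andP=> _ /forallP /(_ d) /eqP. Qed.

Lemma pmX_in X M k d : pmX X M -> k \in M -> d \in kends k -> d \in X.
Proof.
move=> h kM dk; have := pmX_cov d h; rewrite /cov.
case: (d \in X) => // /eqP; rewrite cards_eq0 => /eqP /setP /(_ k).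
by rewrite !inE kM dk.
Qed.

Lemma cov1_uniq M d k1 k2 : cov M d = 1%N -> k1 \in M -> k2 \in M ->
  d \in kends k1 -> d \in kends k2 -> k1 = k2.
Proof.
rewrite /cov => /eqP /cards1P [k0 e] h1 h2 d1 d2.
have : k1 \in [set k in M | d \in kends k] by rewrite inE h1 d1.
have : k2 \in [set k in M | d \in kends k] by rewrite inE h2 d2.
by rewrite e !inE => /eqP -> /eqP ->.
Qed.

Lemma pmX_uniq X M d k1 k2 : pmX X M -> k1 \in M -> k2 \in M ->
  d \in kends k1 -> d \in kends k2 -> k1 = k2.
Proof.
move=> h h1 h2 d1 d2; apply: (cov1_uniq _ h1 h2 d1 d2).
by rewrite (pmX_cov _ h) (pmX_in h h1 d1).
Qed.

Lemma pmX_ex X M d : pmX X M -> d \in X -> exists2 k, k \in M & d \in kends k.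
Proof.
move=> h dX; have := pmX_cov d h; rewrite dX /cov => /eqP /cards1P [k0 e].
have : k0 \in [set k in M | d \in kends k] by rewrite e set11.
by rewrite inE => /andP [] ? ?; exists k0.
Qed.

Lemma exchange_pm (R : Type) (idx : R) (op : Monoid.com_law idx) X M (F : dart E -> R) :
  pmX X M ->
  \big[op/idx]_(u in X) F u = \big[op/idx]_(k in M) \big[op/idx]_(u in kends k) F u.
Proof.
move=> h.
pose p u := odflt (inr (u, u)) [pick k in M | u \in kends k].
have pP u : u \in X -> p u \in M /\ u \in kends (p u).
  move=> uX; rewrite /p; case: pickP => [k /andP [] //|].
  by case: (pmX_ex h uX) => k kM uk /(_ k); rewrite kM uk.
rewrite (partition_big p (fun k => k \in M)); last by move=> u /pP [].
apply: eq_bigr => k kM; apply: eq_bigl => u; apply/idP/idP.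
  by case/andP=> uX /eqP <-; case: (pP u uX).
move=> uk; have uX := pmX_in h kM uk; rewrite uX /=.
by case: (pP u uX) => pM up; rewrite (pmX_uniq h pM kM up uk).
Qed.

Lemma cov_setU1 (M : {set kedge E}) e0 d : e0 \notin M -> cov (e0 |: M) d = ((d \in kends e0) + cov M d)%N.
Proof.
move=> nM; rewrite /cov.
have -> : [set k in e0 |: M | d \in kends k] =
  (if d \in kends e0 then [set e0] else set0) :|: [set k in M | d \in kends k].
  case: (boolP (d \in kends e0)) => hd; apply/setP => k; rewrite !inE;
    case: (eqVneq k e0) => [->|ne] /=; rewrite ?eqxx ?hd ?(negPf ne) ?(negPf hd) ?andbF //.
rewrite cardsU; case: (d \in kends e0) => /=; last by rewrite set0I !cards0 subn0.
rewrite cards1; have -> : [set e0] :&: [set k in M | d \in kends k] = set0.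
  by apply/setP => k; rewrite !inE; case: eqP => // ->; rewrite (negPf nM).
by rewrite cards0 subn0.
Qed.


Lemma tK_sum M : tK sigma M =
  (\sum_(k1 : kedge E | k1 \in M) \sum_(k2 : kedge E | k2 \in M) ((enum_rank k1 < enum_rank k2) && interlace sigma k1 k2 : nat))%N.
Proof.
rewrite /tK -sum1_card pair_big /= big_mkcond [RHS]big_mkcond /=; apply: eq_bigr => p _.
by rewrite inE; case: (p.1 \in M); case: (p.2 \in M) => //=; case: (_ && _).
Qed.

Lemma tK_setU1 (M : {set kedge E}) e0 : e0 \notin M ->
  (forall k, k \in M -> interlace sigma k e0 = interlace sigma e0 k) ->
  tK sigma (e0 |: M) = (tK sigma M + \sum_(k in M) (interlace sigma e0 k : nat))%N.
Proof.
move=> nM hs.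
have sU (F : kedge E -> nat) : (\sum_(k in e0 |: M) F k = F e0 + \sum_(k in M) F k)%N.
  by rewrite (bigD1 e0) ?setU11 //=; congr (_ + _)%N; apply: eq_bigl => k;
     rewrite !inE; case: (eqVneq k e0) => [->|] /=; [by rewrite (negPf nM) | by rewrite andbT].
have dsU (G : kedge E -> kedge E -> nat) :
  (\sum_(k1 : kedge E | k1 \in e0 |: M) \sum_(k2 : kedge E | k2 \in e0 |: M) G k1 k2 =
   G e0 e0 + \sum_(k in M) (G e0 k + G k e0) + \sum_(k1 : kedge E | k1 \in M) \sum_(k2 : kedge E | k2 \in M) G k1 k2)%N.
  rewrite sU /= sU /= [X in _ + X = _](eq_bigr (fun k => G k e0 + \sum_(k2 in M) G k k2)%N); last by move=> k _; rewrite sU.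
  by rewrite !big_split /= !addnA.
rewrite !tK_sum dsU ltnn add0n addnC; congr (_ + _)%N.
apply: eq_bigr => k kM; rewrite hs //.
have ne : enum_rank e0 != enum_rank k.
  by apply: contraNneq nM => /enum_rank_inj ->.
have ne' : (enum_rank e0 : nat) != enum_rank k by rewrite val_eqE.
by case: (ltngtP (enum_rank e0 : nat) (enum_rank k)) ne' => //= _ _; rewrite ?andbF ?addn0.
Qed.

Lemma pmX_setU1 (X : {set dart E}) (M : {set kedge E}) (d0 c : dart E) : d0 \in X -> c \in X -> d0 != c ->
  shortk (inr (d0, c)) && kedge_valid sigma (inr (d0, c)) -> inr (d0, c) \notin M ->
  pmX X (inr (d0, c) |: M) = pmX (X :\ d0 :\ c) M.
Proof.
move=> d0X cX dc hv nM; rewrite /pmX; congr (_ && _).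
  apply/forall_inP/forall_inP => H k kM; first by apply: H; rewrite inE kM orbT.
  by move: kM; rewrite !inE => /orP [/eqP ->|]; [exact: hv | exact: H].
apply: eq_forallb => d; rewrite cov_setU1 // !inE /=.
case: (eqVneq d d0) => [->|n0] /=; first by rewrite d0X (negPf dc) andbF; case: (cov M d).
case: (eqVneq d c) => [->|nc] /=; first by rewrite cX; case: (cov M d).
by rewrite add0n.
Qed.


Lemma sign_sum (R : pzRingType) (I : Type) (r : seq I) (P : pred I) (F : I -> nat) :
  ((-1) ^+ (\sum_(i <- r | P i) F i)%N = \prod_(i <- r | P i) (-1) ^+ (F i) :> R)%R.
Proof. by elim/big_rec2: _ => [|i a b _ <-]; rewrite ?expr0 ?exprD. Qed.

Lemma sign_int (R : pzRingType) (X : {set dart E}) (M : {set kedge E}) (d0 c : dart E) :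
  pmX X M -> d0 \notin X ->
  ((-1) ^+ (\sum_(k in M) (interlace sigma (inr (d0, c)) k : nat))%N =
  (-1) ^+ #|[set u in X | so d0 u && (fx d0 u < fx d0 c)%N]| :> R)%R.
Proof.
move=> h nX.
have -> : #|[set u in X | so d0 u && (fx d0 u < fx d0 c)]| =
    (\sum_(u in X) ((so d0 u && (fx d0 u < fx d0 c)) : nat))%N.
  rewrite -sum1_card big_mkcond [RHS]big_mkcond /=; apply: eq_bigr => u _.
  by rewrite inE; case: (u \in X) => //=; case: (so d0 u && _).
rewrite (@exchange_pm nat 0 addn X M (fun u => (so d0 u && (fx d0 u < fx d0 c) : nat)) h).
rewrite sign_sum [RHS]sign_sum.
apply: eq_bigr => k kM.
case/andP: (pmX_valid h kM); case: k kM => [//|[a b]] kM _ /andP [hab rab].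
have ab : a != b by apply: contraTneq rab => ->; rewrite ltnn.
have aX := pmX_in h kM (set21 a b).
have bX := pmX_in h kM (set22 a b).
have ad : a != d0 by apply: contraNneq nX => <-.
have bd : b != d0 by apply: contraNneq nX => <-.
rewrite /= (@big_setU1 _ _ _ _ a [set b]) ?inE // big_set1 /interlace /strictly_between ad bd /=.
case: (boolP (so d0 a)) => ha.
  have hb : so d0 b := so_trans ha hab.
  rewrite hb /= -[LHS]signr_odd -[RHS]signr_odd.
  by case: (fx d0 a < fx d0 c)%N; case: (fx d0 b < fx d0 c)%N.
have -> : so d0 b = false.
  by apply/negP => hb; apply: (negP ha); apply: so_trans hb _; rewrite so_sym.
by [].
Qed.


Definition evenX (X : {set dart E}) := [forall d, ~~ odd #|[set d' in X | so d d']|].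

Lemma evenX_D2 (X : {set dart E}) (d0 c : dart E) : d0 \in X -> c \in X -> d0 != c -> so d0 c ->
  evenX (X :\ d0 :\ c) = evenX X.
Proof.
move=> d0X cX dc hc; apply: eq_forallb => d; congr (~~ _).
have -> : [set d' in X :\ d0 :\ c | so d d'] = [set d' in X | so d d'] :\ d0 :\ c.
  by apply/setP => u; rewrite !inE !andbA.
rewrite [in RHS](cardsD1 d0) [in RHS](cardsD1 c) !inE d0X cX eq_sym dc /=.
have -> : so d c = so d d0.
  apply/idP/idP => h; first by apply: so_trans h _; rewrite so_sym.
  exact: so_trans h hc.
by rewrite addnA addnn oddD odd_double.
Qed.


Local Open Scope ring_scope.

Definition fX (R : pzRingType) (X : {set dart E}) : R :=
  \sum_(M | pmX X M) (-1) ^+ tK sigma M.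

Lemma tK_set0 : tK sigma set0 = 0%N.
Proof. by apply/eqP; rewrite cards_eq0; apply/eqP/setP => p; rewrite !inE. Qed.

Lemma fX_set0 (R : pzRingType) : fX R set0 = 1.
Proof.
rewrite /fX (eq_bigl (fun M => M == set0)); first by rewrite big_pred1_eq tK_set0 expr0.
move=> M; apply/idP/eqP => [h|->].
  apply/setP => k; rewrite inE; apply/negP => kM.
  case/andP: (pmX_valid h kM); case: k kM => [//|[a b]] kM _ _.
  by have := pmX_in h kM (set21 a b); rewrite inE.
apply/andP; split; first by apply/forall_inP => k; rewrite inE.
apply/forallP => d; rewrite /cov inE.
by rewrite (_ : [set k in set0 | d \in kends k] = set0) ?cards0 //; apply/setP => k; rewrite !inE.
Qed.

Lemma evenX_set0 : evenX set0.
Proof.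
apply/forallP => d.
by rewrite (_ : [set d' in set0 | so d d'] = set0) ?cards0 //; apply/setP => k; rewrite !inE.
Qed.

Theorem fX_eq (R : pzRingType) (X : {set dart E}) : fX R X = (evenX X)%:R.
Proof.
move: (leqnn #|X|); move: {2}#|X| => n; elim: n X => [|n IH] X hX.
  by move: hX; rewrite leqn0 cards_eq0 => /eqP ->; rewrite fX_set0 evenX_set0.
case: (set_0Vmem X) => [->|[d1 d1X]]; first by rewrite fX_set0 evenX_set0.
case: (@arg_minnP _ d1 (mem X) (fun d => nat_of_ord (enum_rank d)) d1X) => d0 d0X d0min.
have {}d0X : d0 \in X := d0X.
set A := [set c in X | so d0 c & c != d0].
set s := fun M : {set kedge E} => (-1) ^+ tK sigma M : R.
have step1 M : pmX X M -> \sum_(c | (c \in A) && (inr (d0, c) \in M)) s M = s M.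
  move=> h; case: (pmX_ex h d0X) => k0 k0M d0k0.
  case/andP: (pmX_valid h k0M); case: k0 k0M d0k0 => [//|[a b]] k0M d0k0 _ /andP [hab rab].
  have aX := pmX_in h k0M (set21 a b).
  have bX := pmX_in h k0M (set22 a b).
  have ad0 : a = d0.
    move: d0k0; rewrite !inE => /orP [/eqP -> //|/eqP e].
    by move: (d0min a aX) rab; rewrite -e /=; case: ltngtP.
  subst a.
  apply: big_pred1 => c /=; apply/idP/idP.
    case/andP => cA cM; apply/eqP.
    have := pmX_uniq h cM k0M (set21 d0 c) d0k0; case=> ->.
    done.
  move/eqP => ->; rewrite k0M andbT !inE bX hab /=.
  by apply: contraTneq rab => ->; rewrite ltnn.
rewrite /fX (eq_bigr (fun M : {set kedge E} => \sum_(c | (c \in A) && (inr (d0, c) \in M)) s M)); last first.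
  by move=> M h; rewrite step1.
rewrite (exchange_big_dep (mem A)) /=; last by move=> M c _ /andP [].
have step2 c : c \in A -> \sum_(M | [&& pmX X M, c \in A & inr (d0, c) \in M]) s M =
    (evenX X)%:R * (-1) ^+ #|[set u in A | (fx d0 u < fx d0 c)%N]|.
  move=> cA; have := cA; rewrite inE => /and3P [cX hc cd].
  set e0 := (inr (d0, c) : kedge E).
  set X' := X :\ d0 :\ c.
  have dc : d0 != c by rewrite eq_sym.
  have hv : shortk e0 && kedge_valid sigma e0.
    rewrite /= hc /= ltn_neqAle d0min // andbT.
    by rewrite val_eqE; apply: contra dc => /eqP /enum_rank_inj ->.
  have d0X' : d0 \notin X' by rewrite !inE eqxx andbF.
  have cX' : c \notin X' by rewrite !inE eqxx.
  rewrite (reindex_onto (fun M' => e0 |: M') (fun M => M :\ e0)) /=; last first.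
    by move=> M /and3P [_ _ eM]; rewrite setD1K.
  rewrite (eq_bigl (fun M' => pmX X' M')); last first.
    move=> M' /=; case: (boolP (e0 \in M')) => eM.
      rewrite (_ : ((e0 |: M') :\ e0 == M') = false) ?andbF; last first.
        by apply/negbTE/eqP => E'; move: eM; rewrite -E' setD11.
      by apply/esym/negP => h; have := pmX_in h eM (set21 d0 c); rewrite (negPf d0X').
    by rewrite setU1K // eqxx andbT setU11 /= cX hc cd /= andbT (pmX_setU1 d0X cX dc hv eM).
  rewrite (eq_bigr (fun M' => s M' * (-1) ^+ #|[set u in A | (fx d0 u < fx d0 c)%N]|)); last first.
    move=> M' h.
    have eM : e0 \notin M'.
      by apply/negP => eM; have := pmX_in h eM (set21 d0 c); rewrite (negPf d0X').
    rewrite /s tK_setU1 //; last first.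
      move=> k kM; case/andP: (pmX_valid h kM); case: k kM => [//|[a b]] kM _ /andP [hab rab].
      have ab : a != b by apply: contraTneq rab => ->; rewrite ltnn.
      have aX := pmX_in h kM (set21 a b).
      have bX := pmX_in h kM (set22 a b).
      have ad0 : a != d0 by apply: contraNneq d0X' => <-.
      have bd0 : b != d0 by apply: contraNneq d0X' => <-.
      have ac : a != c by apply: contraNneq cX' => <-.
      have bc : b != c by apply: contraNneq cX' => <-.
      exact: interlace_sym hab hc ab ad0 ac bd0 bc dc.
    rewrite exprD (sign_int _ _ h d0X'); congr (_ * (-1) ^+ _); apply: eq_card => u; rewrite !inE.
    case: (eqVneq u c) => [->|uc]; first by rewrite ltnn !andbF.
    by case: (u \in X) (so d0 u) (u == d0) (fx d0 u < fx d0 c)%N => [] [] [] [].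
  rewrite -mulr_suml.
  have -> : \sum_(M' | pmX X' M') s M' = fX R X' by [].
  rewrite IH ?evenX_D2 //.
  move: hX; rewrite (cardsD1 d0 X) d0X (cardsD1 c (X :\ d0)) !inE cX eq_sym dc /=.
  by rewrite add1n ltnS => /ltnW.
rewrite (eq_bigr _ step2) -mulr_sumr rank_sum; last first.
  by move=> u v; rewrite !inE => /and3P [_ hu _] /and3P [_ hv _]; apply: fx_inj.
case: (boolP (evenX X)) => ev; last by rewrite mul0r.
rewrite mul1r; move: (forallP ev d0).
have -> : [set d' in X | so d0 d'] = d0 |: A.
  apply/setP => u; rewrite !inE; case: (eqVneq u d0) => [->|ud] /=; first by rewrite d0X so_refl.
  by rewrite andbT.
rewrite cardsU1 (_ : (d0 \notin A) = true); last by rewrite !inE eqxx !andbF.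
by rewrite /= ?add1n /= negbK => ->.
Qed.


Definition XP (P : {set E}) : {set dart E} := [set d | d.1 \in P].
Definition shorts : {set kedge E} := [set k | shortk k].
Definition longs (P : {set E}) : {set kedge E} :=
  [set k | if k is inl e then e \notin P else false].
Definition Lset (M : {set kedge E}) : {set E} := [set e | inl e \notin M].

Lemma kends_inl (e : E) (d : dart E) : (d \in kends (inl e : kedge E)) = (d.1 == e).
Proof. by case: d => d1 []; rewrite /= !inE !xpair_eqE /= ?andbT ?andbF ?orbF. Qed.

Lemma covU (S : {set kedge E}) P d : S \subset shorts ->
  #|[set k in S :|: longs P | d \in kends k]| = (cov S d + (d.1 \notin P))%N.
Proof.
move=> sS.
have nS e : inl e \notin S by apply/negP => /(subsetP sS); rewrite inE.
have -> : [set k in S :|: longs P | d \in kends k] =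
   [set k in S | d \in kends k] :|: (if d.1 \in P then set0 else [set inl d.1]).
  apply/setP => k; rewrite !inE; case: k => [e|[a b]].
    rewrite (negPf (nS e)) /= kends_inl.
    case: (eqVneq d.1 e) => [<-|ne].
      by case: (d.1 \in P); rewrite ?inE ?eqxx ?andbT.
    by rewrite andbF; case: (d.1 \in P); rewrite ?inE //=; apply/esym/eqP => -[] e1; rewrite e1 eqxx in ne.
  by rewrite orbF; case: (d.1 \in P); rewrite ?inE ?orbF.
rewrite cardsU /cov; case: (d.1 \in P) => /=; first by rewrite setI0 !cards0 subn0 addn0.
rewrite cards1 (_ : _ :&: _ = set0) ?cards0 ?subn0 //.
by apply/setP => k; rewrite !inE; case: (eqVneq k (inl d.1)) => [->|]; rewrite ?andbF // (negPf (nS _)).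
Qed.

Lemma pm_iff P (S : {set kedge E}) :
  [&& perfect_matching sigma (S :|: longs P), Lset (S :|: longs P) == P &
      (S :|: longs P) :&: shorts == S] = pmX (XP P) S.
Proof.
apply/idP/idP.
  case/and3P => pm /eqP LP /eqP SS.
  have sS : S \subset shorts by rewrite -SS subsetIr.
  case/andP: pm => /forall_inP hv /forallP hc.
  apply/andP; split.
    apply/forall_inP => k kS; have := subsetP sS k kS; rewrite inE => ->.
    by apply: hv; rewrite inE kS.
  apply/forallP => d; move: (hc d); rewrite covU // inE.
  by case: (d.1 \in P) => /=; rewrite ?addn0 ?addn1.
move=> h.
have sS : S \subset shorts.
  by apply/subsetP => k kS; case/andP: (pmX_valid h kS); rewrite inE.
have nS e : inl e \notin S by apply/negP => /(subsetP sS); rewrite inE.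
apply/and3P; split.
- apply/andP; split.
    apply/forall_inP => k; rewrite inE => /orP [kS|].
      by case/andP: (pmX_valid h kS).
    by case: k; rewrite // => -[] a b; rewrite inE.
  apply/forallP => d; rewrite covU // (pmX_cov _ h) inE.
  by case: (d.1 \in P).
- apply/eqP/setP => e; rewrite !inE (negPf (nS e)) /=.
  by rewrite negbK.
- apply/eqP/setP => k; rewrite !inE; case: k => [e|k] /=.
    by rewrite (negPf (nS e)) andbF.
  by rewrite orbF andbT.
Qed.

Lemma recompose P M : perfect_matching sigma M && (Lset M == P) ->
  (M :&: shorts) :|: longs P = M.
Proof.
case/andP => _ /eqP LP; apply/setP => k; rewrite !inE; case: k => [e|k] /=.
  by rewrite andbF -LP inE negbK.
by rewrite andbT orbF.
Qed.

Lemma tK_U P (S : {set kedge E}) : S \subset shorts -> tK sigma (S :|: longs P) = tK sigma S.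
Proof.
move=> sS; rewrite /tK; apply: eq_card => -[k1 k2]; rewrite !inE /=.
case: k1 => [e1|[a b]]; first by rewrite /interlace !andbF.
case: k2 => [e2|k2]; first by rewrite /interlace !andbF.
by rewrite !orbF.
Qed.

Lemma kD_U P (S : {set kedge E}) kappa : S \subset shorts ->
  kappa_dot_D kappa (S :|: longs P) = #|kappa :\: P|.
Proof.
move=> sS; rewrite /kappa_dot_D; apply: eq_card => e; rewrite !inE.
have nS : inl e \notin S by apply/negP => /(subsetP sS); rewrite inE.
by rewrite (negPf nS) /= andbC.
Qed.

Lemma wD_U (R : rcfType) (x : E -> R) (hx : forall e, 0 <= x e) P (S : {set kedge E}) :
  pmX (XP P) S -> weight_D x (S :|: longs P) = weight_P x P.
Proof.
move=> h.
have sS : S \subset shorts.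
  by apply/subsetP => k kS; case/andP: (pmX_valid h kS); rewrite inE.
rewrite /weight_D (big_setID shorts) /=.
have -> : (S :|: longs P) :&: shorts = S.
  apply/setP => k; rewrite !inE; case: k => [e|k] /=; last by rewrite orbF andbT.
  by rewrite andbF; apply/esym/negP => /(subsetP sS); rewrite inE.
rewrite [X in _ * X]big1 ?mulr1; last first.
  by move=> k; rewrite !inE; case: k.
rewrite (eq_bigr (fun k => \prod_(u in kends k) Num.sqrt (x u.1))); last first.
  move=> k kS; case/andP: (pmX_valid h kS); case: k kS => [//|[a b]] kS _ /andP [hab rab].
  have ab : a != b by apply: contraTneq rab => ->; rewrite ltnn.
  by rewrite /= (@big_setU1 _ _ _ _ a [set b]) ?inE // big_set1 sqrtrM.
rewrite -(exchange_pm _ _ h).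
rewrite (_ : \prod_(u in XP P) Num.sqrt (x u.1) =
   \prod_(e : E) \prod_(b : bool) (if e \in P then Num.sqrt (x e) else 1)); last first.
  by rewrite pair_big /= big_mkcond; apply: eq_bigr => -[e b] _; rewrite inE.
rewrite /weight_P [RHS]big_mkcond; apply: eq_bigr => e _; rewrite big_bool.
by case: (e \in P); rewrite /= ?mulr1 // -expr2 sqr_sqrtr.
Qed.

End S.

Lemma even_XP (E : finType) (sigma : {perm dart E}) (P : {set E}) :
  even_subgraph sigma P = evenX sigma (XP P).
Proof.
apply: eq_forallb => d; congr (~~ odd _); apply: eq_card => u; rewrite !inE.
by rewrite andbC.
Qed.

Unset Implicit Arguments.
Local Open Scope ring_scope.

Theorem lemma2p3 (E : finType) (sigma : {perm dart E})
  (Hconn : map_connected sigma) (Hplanar : map_planar sigma)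
  (R : rcfType) (x : E -> R) (hx : forall e, 0 <= x e)
  (kappa : {set E}) :
  \sum_(P : {set E} | even_subgraph sigma P)
      (-1) ^+ kappa_dot_P kappa P * weight_P x P
  = (-1) ^+ #|kappa| *
    \sum_(M : {set kedge E} | perfect_matching sigma M)
      (-1) ^+ tK sigma M * (-1) ^+ kappa_dot_D kappa M * weight_D x M.
Proof.
rewrite mulr_sumr (partition_big (@Lset E) predT) //= big_mkcond /=.
apply: eq_bigr => P _.
rewrite (reindex_onto (fun S => S :|: longs P) (fun M => M :&: shorts E)) /=; last first.
  by move=> M hM; apply: recompose hM.
rewrite (eq_bigl (fun S => pmX sigma (XP P) S)); last by move=> S; rewrite -andbA pm_iff.
rewrite (eq_bigr (fun S => (-1) ^+ tK sigma S * ((-1) ^+ kappa_dot_P kappa P * weight_P x P))); last first.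
  move=> S h.
  have sS : S \subset shorts E.
    by apply/subsetP => k kS; case/andP: (pmX_valid h kS); rewrite inE.
  rewrite tK_U // kD_U // (wD_U hx h) /kappa_dot_P -(cardsID P kappa) exprD.
  rewrite -[(-1) ^+ #|kappa :\: P|]signr_odd.
  move: ((-1) ^+ #|kappa :&: P|) ((-1) ^+ tK sigma S) (weight_P x P) (odd #|kappa :\: P|) => c a w [].
    by rewrite expr1; ring.
  by rewrite expr0; ring.
rewrite -mulr_suml.
have -> : \sum_(i | pmX sigma (XP P) i) (-1) ^+ tK sigma i = fX sigma R (XP P) by [].
by rewrite fX_eq -even_XP; case: (even_subgraph sigma P); rewrite ?mul1r ?mul0r.
Qed.
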